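(* Let $X\subset\mathbb{P}^1_x\times\mathbb{P}^1_y\times\mathbb{P}^1_z$ be a smooth surface of tri-degree $(2,2,2)$ and suppose none of $\pi_x,\pi_y,\pi_z$ contracts a curve. Then the group generated by $\iota_x^*|_M,\iota_y^*|_M,\iota_z^*|_M$ is the free product $\langle\iota_x^*|_M\rangle*\langle\iota_y^*|_M\rangle*\langle\iota_z^*|_M\rangle\cong(\mathbb{Z}/2)*(\mathbb{Z}/2)*(\mathbb{Z}/2)$, and hence $\langle\iota_x,\iota_y,\iota_z\rangle=\langle\iota_x\rangle*\langle\iota_y\rangle*\langle\iota_z\rangle\cong(\mathbb{Z}/2)*(\mathbb{Z}/2)*(\mathbb{Z}/2)$. In particular $\iota_x\circ\iota_y$ and $\iota_z\circ\iota_x\circ\iota_y\circ\iota_z$ generate a free group of rank $2$.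
   Context: $\pi_x,\pi_y,\pi_z$ are the restrictions to $X$ of the projections to $\mathbb{P}^1_y\times\mathbb{P}^1_z$, $\mathbb{P}^1_x\times\mathbb{P}^1_z$, $\mathbb{P}^1_x\times\mathbb{P}^1_y$; they are double covers with covering involutions $\iota_x,\iota_y,\iota_z$. $M=\mathbb{Z}h_x\oplus\mathbb{Z}h_y\oplus\mathbb{Z}h_z\subset\mathrm{NS}(X)$, where $h_x,h_y,h_z$ are fiber classes of the projections of $X$ to $\mathbb{P}^1_x,\mathbb{P}^1_y,\mathbb{P}^1_z$; under the hypothesis, $M$ is invariant under $\iota_x^*,\iota_y^*,\iota_z^*$, whose matrices in the basis $h_x,h_y,h_z$ are $\begin{pmatrix}-1&0&0\\2&1&0\\2&0&1\end{pmatrix}$, $\begin{pmatrix}1&2&0\\0&-1&0\\0&2&1\end{pmatrix}$, $\begin{pmatrix}1&0&2\\0&1&2\\0&0&-1\end{pmatrix}$. *)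

(* Defs.v *)
From HB Require Import structures.
From mathcomp Require Import all_boot all_order all_algebra.
Set Implicit Arguments. Unset Strict Implicit. Unset Printing Implicit Defensive.
Import Order.TTheory GRing.Theory Num.Theory.
Local Open Scope ring_scope.

Definition mx3 (r : seq (seq int)) : 'M[int]_3 :=
  \matrix_(i < 3, j < 3) nth 0 (nth [::] r i) j.

(* Matrices of iota_x^*, iota_y^*, iota_z^* on M in the basis h_x, h_y, h_z
   (column j = image of the j-th basis vector). *)
Definition Ix : 'M[int]_3 := mx3 [:: [:: -1; 0; 0]; [:: 2; 1; 0]; [:: 2; 0; 1]].
Definition Iy : 'M[int]_3 := mx3 [:: [:: 1; 2; 0]; [:: 0; -1; 0]; [:: 0; 2; 1]].
Definition Iz : 'M[int]_3 := mx3 [:: [:: 1; 0; 2]; [:: 0; 1; 2]; [:: 0; 0; -1]].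

Definition weval (G L : Type) (mul : G -> G -> G) (one : G) (g : L -> G)
  (w : seq L) : G := foldr (fun l acc => mul (g l) acc) one w.

Definition gen3 (G : Type) (a b c : G) (i : 'I_3) : G :=
  if val i == 0%N then a else if val i == 1%N then b else c.

(* Reduced words in the free product of three copies of Z/2:
   nonempty, no two consecutive equal letters. *)
Definition reduced3 (w : seq 'I_3) : bool :=
  (w != [::]) && sorted (fun a b => a != b) w.

Definition gen2 (G : Type) (u ui v vi : G) (l : bool * bool) : G :=
  match l with
  | (false, false) => u | (false, true) => ui
  | (true, false) => v | (true, true) => vi
  end.

(* Freely reduced nonempty words: no letter followed by its inverse. *)
Definition reduced_free2 (w : seq (bool * bool)) : bool :=
  (w != [::]) && sorted (fun a b => ~~ ((a.1 == b.1) && (a.2 != b.2))) w.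

(* Main.v *)
Require Import Defs.
From HB Require Import structures.
From mathcomp Require Import all_boot all_order all_algebra zify.
Import Order.TTheory GRing.Theory Num.Theory.
Local Open Scope ring_scope.

Definition T3 := (int * int * int)%type.
Definition act (i : 'I_3) (t : T3) : T3 :=
  let: (a, b, c) := t in
  if val i == 0%N then (2*b + 2*c - a, b, c)
  else if val i == 1%N then (a, 2*a + 2*c - b, c)
  else (a, b, 2*a + 2*b - c).
Definition inv (i : 'I_3) (t : T3) : Prop :=
  let: (a, b, c) := t in 0 < a /\ 0 < b /\ 0 < c /\
  (if val i == 0%N then b < a /\ c < a
   else if val i == 1%N then a < b /\ c < b else a < c /\ b < c).

Lemma step i j t : i != j -> inv i t -> inv j (act j t).
Proof.
case: t => [[a b] c].
case: i => [[|[|[|i]]] Hi] //; case: j => [[|[|[|j]]] Hj] //= _; lia.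
Qed.
Definition rowv (t : T3) : 'rV[int]_3 :=
  \row_(k < 3) (if val k == 0%N then t.1.1 else if val k == 1%N then t.1.2 else t.2).

Lemma rowv_act i t : rowv t *m gen3 Ix Iy Iz i = rowv (act i t).
Proof.
case: t => [[a b] c]; apply/rowP => k.
rewrite !mxE !big_ord_recl big_ord0 /gen3.
case: i => [[|[|[|i]]] Hi] //=; rewrite /Ix /Iy /Iz /mx3 !mxE /=;
case: k => [[|[|[|k]]] Hk] //=; lia.
Qed.

Lemma IxIx : Ix *m Ix = 1%:M.
Proof.
apply/matrixP => i j; rewrite !mxE !big_ord_recl big_ord0 /Ix /mx3 !mxE /=.
case: i => [[|[|[|i]]] Hi] //=; case: j => [[|[|[|j]]] Hj] //=; rewrite !mxE /=; lia.
Qed.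
Lemma IyIy : Iy *m Iy = 1%:M.
Proof.
apply/matrixP => i j; rewrite !mxE !big_ord_recl big_ord0 /Iy /mx3 !mxE /=.
case: i => [[|[|[|i]]] Hi] //=; case: j => [[|[|[|j]]] Hj] //=; rewrite !mxE /=; lia.
Qed.
Lemma IzIz : Iz *m Iz = 1%:M.
Proof.
apply/matrixP => i j; rewrite !mxE !big_ord_recl big_ord0 /Iz /mx3 !mxE /=.
case: i => [[|[|[|i]]] Hi] //=; case: j => [[|[|[|j]]] Hj] //=; rewrite !mxE /=; lia.
Qed.

Definition colv (t : T3) : 'cV[int]_3 :=
  \col_(k < 3) (if val k == 0%N then t.1.1 else if val k == 1%N then t.1.2 else t.2).
Definition cact (i : 'I_3) (t : T3) : T3 :=
  let: (a, b, c) := t in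
  if val i == 0%N then (- a, 2*a + b, 2*a + c)
  else if val i == 1%N then (a + 2*b, - b, 2*b + c)
  else (a + 2*c, b + 2*c, - c).
Definition phi (t : T3) : T3 := let: (a, b, c) := t in (b + c, a + c, a + b).

Lemma colv_act i t : gen3 Ix Iy Iz i *m colv t = colv (cact i t).
Proof.
case: t => [[a b] c]; apply/colP => k.
rewrite !mxE !big_ord_recl big_ord0 /gen3.
case: i => [[|[|[|i]]] Hi] //=; rewrite /Ix /Iy /Iz /mx3 !mxE /=;
case: k => [[|[|[|k]]] Hk] //=; lia.
Qed.

Lemma phi_cact i t : phi (cact i t) = act i (phi t).
Proof.
case: t => [[a b] c]; case: i => [[|[|[|i]]] Hi] //=; congr (_, _, _); lia.
Qed.

Lemma pp w : forall i t, sorted (fun a b => a != b) (i :: w) -> inv i t ->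
  inv (last i w) (foldl (fun t l => act l t) t w).
Proof.
elim: w => [//|j w IH] i t /= /andP [Hij Hw] Hi.
exact: (IH j _ Hw (step _ _ _ Hij Hi)).
Qed.

Lemma start i (k : int) : 0 < k -> inv i (act i (k, k, k)).
Proof. by case: i => [[|[|[|i]]] Hi] //= Hk; lia. Qed.

Lemma notinv i (k : int) : ~ inv i (k, k, k).
Proof. by case: i => [[|[|[|i]]] Hi] //=; lia. Qed.

Lemma rowv_weval w t :
  rowv t *m weval (@mulmx int 3 3 3) 1%:M (gen3 Ix Iy Iz) w =
  rowv (foldl (fun t l => act l t) t w).
Proof.
elim: w t => [|l w IH] t /=; first by rewrite mulmx1.
by rewrite mulmxA rowv_act IH.
Qed.

Lemma rowv_inj t s : rowv t = rowv s -> t = s.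
Proof.
case: t => [[a b] c]; case: s => [[a' b'] c'] /rowP H.
have := H ord0; have := H (@Ordinal 3 1 isT); have := H (@Ordinal 3 2 isT).
by rewrite !mxE /= => -> -> ->.
Qed.

Lemma colv_inj t s : colv t = colv s -> t = s.
Proof.
case: t => [[a b] c]; case: s => [[a' b'] c'] /colP H.
have := H ord0; have := H (@Ordinal 3 1 isT); have := H (@Ordinal 3 2 isT).
by rewrite !mxE /= => -> -> ->.
Qed.

Lemma part1 w : reduced3 w ->
  weval (@mulmx int 3 3 3) 1%:M (gen3 Ix Iy Iz) w <> 1%:M.
Proof.
case: w => [//|j w] /andP [_ Hs] E.
have := rowv_weval (j :: w) (1, 1, 1); rewrite E mulmx1 => /rowv_inj E2.
have H : inv (last j w) (foldl (fun t l => act l t) (1, 1, 1) (j :: w)) :=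
  pp _ _ _ Hs (start j _ ltr01).
by rewrite -E2 in H; apply: (notinv _ _ H).
Qed.

Section Gen.
Variables (G L : Type) (mul : G -> G -> G) (one : G) (f : G -> 'M[int]_3).
Hypothesis fM : forall g h, f (mul g h) = f h *m f g.
Hypothesis f1 : f one = 1%:M.

Lemma colv_weval (g : L -> G) (F : L -> T3 -> T3) :
  (forall l t, f (g l) *m colv t = colv (F l t)) ->
  forall w t, f (weval mul one g w) *m colv t = colv (foldl (fun t l => F l t) t w).
Proof.
move=> HF; elim => [|l w IH] t /=; first by rewrite f1 mul1mx.
by rewrite fM -mulmxA HF IH.
Qed.
End Gen.

Lemma phi_fold (L : Type) (F Gf : L -> T3 -> T3) :
  (forall l t, phi (F l t) = Gf l (phi t)) ->
  forall w t, phi (foldl (fun t l => F l t) t w) = foldl (fun t l => Gf l t) (phi t) w.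
Proof. by move=> H; elim => [|l w IH] t //=; rewrite IH H. Qed.

Definition oX : 'I_3 := @Ordinal 3 0 isT.
Definition oY : 'I_3 := @Ordinal 3 1 isT.
Definition oZ : 'I_3 := @Ordinal 3 2 isT.

Definition F2 (l : bool * bool) (t : T3) : T3 :=
  match l with
  | (false, false) => cact oY (cact oX t)
  | (false, true) => cact oX (cact oY t)
  | (true, false) => cact oZ (cact oY (cact oX (cact oZ t)))
  | (true, true) => cact oZ (cact oX (cact oY (cact oZ t)))
  end.
Definition G2 (l : bool * bool) (t : T3) : T3 :=
  match l with
  | (false, false) => act oY (act oX t)
  | (false, true) => act oX (act oY t)
  | (true, false) => act oZ (act oY (act oX (act oZ t)))
  | (true, true) => act oZ (act oX (act oY (act oZ t)))
  end.
Definition Inv (l : bool * bool) (t : T3) : Prop :=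
  match l with
  | (false, false) => inv oY t
  | (false, true) => inv oX t
  | (true, false) => exists s, inv oY s /\ t = act oZ s
  | (true, true) => exists s, inv oX s /\ t = act oZ s
  end.

Lemma phi_F2 l t : phi (F2 l t) = G2 l (phi t).
Proof. by case: l => [[] []] /=; rewrite !phi_cact. Qed.

Lemma step2 l l' t : ~~ ((l.1 == l'.1) && (l.2 != l'.2)) -> Inv l t -> Inv l' (G2 l' t).
Proof.
case: l => [[] []]; case: l' => [[] []] //= _ Hl;
  first [ eexists; split; last reflexivity | idtac ];
  first [ move: Hl => [[[a b] c] [H ->]] | case: t Hl => [[a b] c] H ];
  simpl in *; lia.
Qed.

Lemma start2 l : Inv l (G2 l (2, 2, 2)).
Proof.
case: l => [[] []]; cbv [Inv]; first [ eexists; split; last reflexivity | idtac ]; simpl; lia.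
Qed.

Lemma notInv l : ~ Inv l (2, 2, 2).
Proof.
case: l => [[] []] /=; first [ move=> [[[a b] c] [H E]] | idtac ]; simpl in *;
  try (case: E => E1 E2 E3); lia.
Qed.

Lemma pp2 w : forall l t,
  sorted (fun a b : bool * bool => ~~ ((a.1 == b.1) && (a.2 != b.2))) (l :: w) ->
  Inv l t -> Inv (last l w) (foldl (fun t l => G2 l t) t w).
Proof.
elim: w => [//|j w IH] i t /= /andP [Hij Hw] Hi.
exact: (IH j _ Hw (step2 _ _ _ Hij Hi)).
Qed.

Theorem proposition3p5 :
  (Ix *m Ix = 1%:M /\ Iy *m Iy = 1%:M /\ Iz *m Iz = 1%:M /\
   forall w : seq 'I_3, reduced3 w ->
     weval (@mulmx int 3 3 3) 1%:M (gen3 Ix Iy Iz) w <> 1%:M) /\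
  (forall (G : Type) (mul : G -> G -> G) (one : G) (f : G -> 'M[int]_3)
          (ix iy iz : G),
     associative mul -> left_id one mul -> right_id one mul ->
     (forall g h, f (mul g h) = f h *m f g) -> f one = 1%:M ->
     mul ix ix = one -> mul iy iy = one -> mul iz iz = one ->
     f ix = Ix -> f iy = Iy -> f iz = Iz ->
     (forall w : seq 'I_3, reduced3 w -> weval mul one (gen3 ix iy iz) w <> one) /\
     (forall w : seq (bool * bool), reduced_free2 w ->
        weval mul one
          (gen2 (mul ix iy) (mul iy ix)
                (mul iz (mul ix (mul iy iz))) (mul iz (mul iy (mul ix iz)))) w
        <> one)).
Proof.
split; first by split; [exact: IxIx | split; [exact: IyIy | split; [exact: IzIz | exact: part1]]].
move=> G mul one f ix iy iz _ _ _ fM f1 _ _ _ fx fy fz; split.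
- case=> [//|j w] /andP [_ Hs] E.
  have HF : forall l t, f (gen3 ix iy iz l) *m colv t = colv (cact l t).
    move=> l t; rewrite -colv_act /gen3; congr (_ *m _).
    by case: ifP => _; [|case: ifP => _].
  have := @colv_weval _ _ mul one f fM f1 _ _ HF (j :: w) (1, 1, 1).
  rewrite E f1 mul1mx => /colv_inj E2.
  have E3 := @phi_fold _ _ _ phi_cact (j :: w) (1, 1, 1).
  rewrite -E2 in E3.
  have H : inv (last j w) (foldl (fun t l => act l t) (phi (1, 1, 1)) (j :: w)) :=
    pp _ _ _ Hs (start j (1 + 1) ltac:(lia)).
  rewrite -E3 in H; exact: (notinv _ (1 + 1) H).
- case=> [//|j w] /andP [_ Hs] E.
  have HF : forall l t, f (gen2 (mul ix iy) (mul iy ix)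
                (mul iz (mul ix (mul iy iz))) (mul iz (mul iy (mul ix iz))) l) *m colv t
             = colv (F2 l t).
    have cX t : Ix *m colv t = colv (cact oX t) by exact: (colv_act oX t).
    have cY t : Iy *m colv t = colv (cact oY t) by exact: (colv_act oY t).
    have cZ t : Iz *m colv t = colv (cact oZ t) by exact: (colv_act oZ t).
    move=> [[] []] t /=; rewrite ?fM ?fx ?fy ?fz -?mulmxA;
      by rewrite ?cX ?cY ?cZ ?cX ?cY ?cZ ?cX ?cY ?cZ ?cX ?cY ?cZ.
  have := @colv_weval _ _ mul one f fM f1 _ _ HF (j :: w) (1, 1, 1).
  rewrite E f1 mul1mx => /colv_inj E2.
  have E3 := @phi_fold _ _ _ phi_F2 (j :: w) (1, 1, 1).
  rewrite -E2 in E3.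
  have H : Inv (last j w) (foldl (fun t l => G2 l t) (phi (1, 1, 1)) (j :: w)) :=
    pp2 _ _ _ Hs (start2 j).
  rewrite -E3 in H; exact: (notInv _ H).
Qed.
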